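(* Let $0\le q\in L_1^{loc}(\mathbb{R})$ and assume there is $a\in(0,\infty)$ with $\inf_{x\in\mathbb{R}}\int_{x-a}^{x+a}q(t)\,dt>0$. For $\lambda\in(0,\infty)$ set $$I_1(x)=\int_x^\infty e^{-\int_x^t(q(\xi)+\lambda)d\xi}dt,\qquad I_2(x)=\int_{-\infty}^x e^{-\int_t^x(q(\xi)+\lambda)d\xi}dt.$$ Then there exist $\delta_1(\lambda)>0$ and $\delta_2(\lambda)>0$ such that $$\sup_{x\in\mathbb{R}}I_1(x)=\frac{1}{\lambda+\delta_1(\lambda)},\qquad\sup_{x\in\mathbb{R}}I_2(x)=\frac{1}{\lambda+\delta_2(\lambda)}.$$ *)

(* Defs.v *)
From HB Require Import structures.
From mathcomp Require Import all_boot all_order all_algebra.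
From mathcomp Require Import all_classical all_reals all_analysis.
Set Implicit Arguments. Unset Strict Implicit. Unset Printing Implicit Defensive.
Import Order.TTheory GRing.Theory Num.Theory.
Local Open Scope classical_set_scope.
Local Open Scope ring_scope.

Definition I1 {R : realType} (q : R -> R) (lam : R) (x : R) : \bar R :=
  (\int[@lebesgue_measure R]_(t in `[x, +oo[)
     (expR (- Rintegral (@lebesgue_measure R) `[x, t] (fun xi => q xi + lam)))%:E)%E.

Definition I2 {R : realType} (q : R -> R) (lam : R) (x : R) : \bar R :=
  (\int[@lebesgue_measure R]_(t in `]-oo, x])
     (expR (- Rintegral (@lebesgue_measure R) `[t, x] (fun xi => q xi + lam)))%:E)%E.

(* Main.v *)
Require Import Defs.
From HB Require Import structures.
From mathcomp Require Import all_boot all_order all_algebra.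
From mathcomp Require Import all_classical all_reals all_analysis.
From mathcomp Require Import measurable_realfun ring lra.
Import Order.TTheory GRing.Theory Num.Theory.
Import numFieldTopology.Exports.
Local Open Scope classical_set_scope.
Local Open Scope ring_scope.
Set Implicit Arguments. Unset Strict Implicit.

Section S.
Context {R : realType}.
Notation mu := (@lebesgue_measure R).

Lemma cexpM (l : R) : continuous (fun z : R^o => expR (l * z)).
Proof.
move=> z; apply: continuous_comp; last exact: continuous_expR.
by apply: continuousM => //; exact: cst_continuous.
Qed.

Lemma cexpNM (l : R) : continuous (fun z : R^o => expR (- l * z)).
Proof.
move=> z; apply: continuous_comp; last exact: continuous_expR.
by apply: continuousM => //; apply: (@continuousN _ R^o); exact: cst_continuous.
Qed.

Lemma int_expy (l u : R) : 0 < l ->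
  (\int[mu]_(t in `[u, +oo[) (expR (- l * t))%:E = (expR (- l * u) / l)%:E)%E.
Proof.
move=> l0.
rewrite (@ge0_continuous_FTC2y _ _ (fun x => - (expR (- l * x)) / l) _ 0)//.
- by rewrite -EFinB sub0r mulNr opprK.
- by apply: continuous_subspaceT; exact: cexpNM.
- rewrite -(mul0r l^-1) -oppr0; apply: cvgMl; apply: cvgN.
  rewrite (_ : (fun x => expR (- l * x)) =
               (fun z => expR (- z)) \o (fun z => l * z)); last first.
    by apply: eq_fun => x; rewrite mulNr.
  apply: (@cvg_comp _ _ _ _ _ _ (pinfty_nbhs R)); last exact: cvgr_expR.
  exact: gt0_cvgMry.
- apply/cvg_at_right_filter; apply: cvgMl; apply: cvgN; exact: cexpNM.
- move=> z _.
  rewrite derive1E deriveM// ?deriveN //.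
  rewrite derive_cst scaler0 add0r -derive1E derive1_comp// derive1E.
  have /funeqP -> := @derive_expR R.
  rewrite derive1Ml// derive1_id mulr1.
  rewrite -[LHS]/(l^-1 * - (expR (- l * z) * - l)) !mulrN opprK mulrCA mulVf ?mulr1//; exact: lt0r_neq0.
Qed.

Lemma int_expNy (l u : R) : 0 < l ->
  (\int[mu]_(t in `]-oo, u]) (expR (l * t))%:E = (expR (l * u) / l)%:E)%E.
Proof.
move=> l0.
have := @ge0_integration_by_substitutionNy R (fun t => expR (l * t)) (- u).
move=> H; rewrite -[u in LHS]opprK; etransitivity; first apply: H.
- apply: continuous_subspaceT => z.
  move: z; apply: cexpM.
- by move=> z _; rewrite expR_ge0.
transitivity (\int[mu]_(x in `[(- u)%R, +oo[) (expR (- l * x))%:E)%E.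
  apply: eq_integral => z _; by rewrite /comp mulrN -mulNr.
by rewrite int_expy// mulrNN.
Qed.

Lemma li_int (f : R -> R) u v : locally_integrable setT f ->
  mu.-integrable `[u, v] (EFin \o f).
Proof.
move=> [mf _ fi]; apply/integrableP; split.
  by apply/measurable_EFinP; exact: measurable_funS mf.
apply: fi => //; exact: segment_compact.
Qed.

Lemma li_cst (l : R) : locally_integrable setT (fun _ : R => l).
Proof.
split => //; first exact: openT.
move=> K _ cK; rewrite integral_cst//=; last exact: compact_measurable.
rewrite lte_mul_pinfty//; exact: compact_finite_measure.
Qed.

Lemma mu_itvE (x t : R) : x <= t -> mu `[x, t] = (t - x)%:E.
Proof.
move=> xt; rewrite /reverse_coercion lebesgue_measure_itv/= lte_fin.
move: xt; rewrite le_eqVlt => /predU1P[->|xt']; first by rewrite ltxx subrr.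
by rewrite xt'.
Qed.

Lemma mu_itv (x t : R) : x <= t -> fine (mu `[x, t]) = t - x.
Proof.
move=> xt; rewrite /reverse_coercion lebesgue_measure_itv/= lte_fin.
move: xt; rewrite le_eqVlt => /predU1P[->|xt']; first by rewrite ltxx subrr.
by rewrite xt'.
Qed.

Lemma Rint_split (f : R -> R) (l x t : R) : locally_integrable setT f -> x <= t ->
  Rintegral mu `[x, t] (fun xi => f xi + l) = Rintegral mu `[x, t] f + l * (t - x).
Proof.
move=> hf xt.
rewrite RintegralD//; last exact: (li_int _ _ (li_cst l)).
  by rewrite Rintegral_cst// mu_itv.
exact: (li_int _ _ hf).
Qed.

Lemma Rint_mono (f : R -> R) (A B : set R) : measurable A -> measurable B ->
  A `<=` B -> (forall x, B x -> 0 <= f x) -> mu.-integrable B (EFin \o f) ->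
  Rintegral mu A f <= Rintegral mu B f.
Proof.
move=> mA mB AB f0 fi.
rewrite /Rintegral fine_le//.
- apply: integrable_fin_num => //; exact: integrableS fi.
- exact: integrable_fin_num.
- apply: ge0_subset_integral => //.
  by case/integrableP: fi.
Qed.

Lemma mexp (l x : R) (D : set R) : measurable_fun D (fun t => (expR (- l * (t - x)))%:E).
Proof.
apply/measurable_EFinP; apply: measurable_funTS; apply: continuous_measurable_fun => z.
apply: continuous_comp; last exact: continuous_expR.
apply: continuousM => //; first exact: cst_continuous.
apply: continuousB => //; exact: cst_continuous.
Qed.

Lemma int_expy_sh (l x u : R) : 0 < l ->
  (\int[mu]_(t in `[u, +oo[) (expR (- l * (t - x)))%:E = (expR (- l * (u - x)) / l)%:E)%E.
Proof.
move=> l0.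
have E t : expR (- l * (t - x)) = expR (l * x) * expR (- l * t).
  by rewrite -expRD; congr expR; ring.
under eq_integral do rewrite E EFinM.
rewrite ge0_integralZl_EFin//; last first.
  apply/measurable_EFinP; apply: measurable_funTS; apply: continuous_measurable_fun; exact: cexpNM.
rewrite int_expy// -EFinM E; congr EFin; ring.
Qed.

Lemma int_expNy_sh (l x u : R) : 0 < l ->
  (\int[mu]_(t in `]-oo, u]) (expR (- l * (x - t)))%:E = (expR (- l * (x - u)) / l)%:E)%E.
Proof.
move=> l0.
have E t : expR (- l * (x - t)) = expR (- l * x) * expR (l * t).
  by rewrite -expRD; congr expR; ring.
under eq_integral do rewrite E EFinM.
rewrite ge0_integralZl_EFin//; last first.
  apply/measurable_EFinP; apply: measurable_funTS; apply: continuous_measurable_fun; exact: cexpM.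
rewrite int_expNy// -EFinM E; congr EFin; ring.
Qed.

Lemma sup_lemma (I : R -> \bar R) (l B c : R) : 0 < l -> 0 < c -> B < l^-1 ->
  (forall x, (I x <= B%:E)%E) -> (c%:E <= I 0%R)%E ->
  exists2 d : R, 0 < d & ereal_sup [set I x | x in [set: R]] = ((l + d)^-1)%:E.
Proof.
move=> l0 c0 Bl hB hc.
have hS1 : (ereal_sup [set I x | x in [set: R]] <= B%:E)%E.
  by apply: ge_ereal_sup => _ [x _ <-]; exact: hB.
have hS2 : (c%:E <= ereal_sup [set I x | x in [set: R]])%E.
  by apply: le_trans hc _; apply: ereal_sup_ubound; exists 0.
move: hS1 hS2; case: (ereal_sup _) => [s| |] //= hs1 hs2.
rewrite lee_fin in hs1; rewrite lee_fin in hs2.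
have s0 : 0 < s by apply: lt_le_trans hs2.
have sl : s < l^-1 by apply: le_lt_trans Bl.
exists (s^-1 - l).
  rewrite subr_gt0 -[l]invrK ltf_pV2 ?posrE ?invr_gt0 //.
by rewrite addrC subrK invrK.
Qed.
End S.

Section Main.
Context {R : realType}.
Notation mu := (@lebesgue_measure R).

Lemma Rint_itv_mono (f : R -> R) (f0 : forall x, 0 <= f x)
  (lf : locally_integrable setT f) (a b c d : R) : c <= a -> b <= d ->
  Rintegral mu `[a, b] f <= Rintegral mu `[c, d] f.
Proof.
move=> ca bd; apply: Rint_mono => //.
- by apply: subset_itv; rewrite bnd_simp.
- exact: li_int.
Qed.

Variable q : R -> R.
Hypothesis hq0 : forall x, 0 <= q x.
Hypothesis hqloc : locally_integrable setT q.
Variable lam : R.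
Hypothesis hlam : 0 < lam.

Let F x t := Rintegral mu `[x, t] (fun xi => q xi + lam).
Let P x t := Rintegral mu `[x, t] q.

Let hql : locally_integrable setT (fun xi => q xi + lam).
Proof. exact: (locally_integrableD hqloc (li_cst lam)). Qed.

Let hql0 xi : 0 <= q xi + lam.
Proof. by rewrite addr_ge0// ltW. Qed.

Let h1 x t := expR (- F x t).
Let h2 x t := expR (- F t x).

Let mh1 x (D : set R) : measurable D -> measurable_fun D (fun t => (h1 x t)%:E).
Proof.
move=> mD; apply/measurable_EFinP; apply: nonincreasing_measurable => // t1 t2 t12.
by rewrite /h1 ler_expR lerN2; apply: Rint_itv_mono.
Qed.

Let mh2 x (D : set R) : measurable D -> measurable_fun D (fun t => (h2 x t)%:E).
Proof.
move=> mD; apply/measurable_EFinP; apply: nondecreasing_measurable => // t1 t2 t12.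
by rewrite /h2 ler_expR lerN2; apply: Rint_itv_mono.
Qed.

Let h1_le x t : x <= t -> h1 x t <= expR (- lam * (t - x)).
Proof.
move=> xt; rewrite /h1 ler_expR /F Rint_split// mulNr lerN2 lerDr.
exact: Rintegral_ge0.
Qed.

Let h1_le2 x t m : m <= P x t -> x <= t -> h1 x t <= expR (- m) * expR (- lam * (t - x)).
Proof.
move=> mP xt; rewrite /h1 -expRD ler_expR /F Rint_split//.
rewrite /P in mP; lra.
Qed.

Let h2_le x t : t <= x -> h2 x t <= expR (- lam * (x - t)).
Proof.
move=> xt; rewrite /h2 ler_expR /F Rint_split// mulNr lerN2 lerDr.
exact: Rintegral_ge0.
Qed.

Let h2_le2 x t m : m <= P t x -> t <= x -> h2 x t <= expR (- m) * expR (- lam * (x - t)).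
Proof.
move=> mP xt; rewrite /h2 -expRD ler_expR /F Rint_split//.
rewrite /P in mP; lra.
Qed.


Lemma I1_ub x s m : 0 < s -> m <= P x (x + s) ->
  (I1 q lam x <= (lam^-1 - (1 - expR (- m)) * (expR (- lam * s) / lam))%:E)%E.
Proof.
move=> s0 hm.
have xs : x <= x + s by rewrite lerDl ltW.
have U : `[x, +oo[%classic = `[x, x + s[%classic `|` `[x + s, +oo[%classic :> set R.
  by apply: itv_bndbnd_setU; rewrite bnd_simp.
have D : [disjoint `[x, x + s[%classic & `[x + s, +oo[%classic].
  apply/disj_setPS => t [/=]; rewrite !in_itv/= andbT => /andP[_ t1] t2.
  by move: t1; rewrite ltNge t2.
have Eg : (\int[mu]_(t in `[x, (x + s)%R[) (expR (- lam * (t - x))%R)%:E =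
           (lam^-1 - expR (- lam * s) / lam)%R%:E)%E.
  have := int_expy_sh x x hlam; rewrite U ge0_integral_setU//; last first.
    exact: (mexp lam x).
  rewrite int_expy_sh// subrr mulr0 expR0 div1r [x + s]addrC addrK.
  set A := (\int[_]_(t in _) _)%E.
  clearbody A; case: A => [r| |] H.
  - by move: H; rewrite -EFinD => -[E]; congr EFin; lra.
  - by move: H; rewrite addye.
  - by move: H; rewrite addNye.
have le1 : (\int[mu]_(t in `[x, (x + s)%R[) (h1 x t)%:E <=
            \int[mu]_(t in `[x, (x + s)%R[) (expR (- lam * (t - x))%R)%:E)%E.
  apply: ge0_le_integral => //.
  - by move=> t _; rewrite lee_fin expR_ge0.
  - exact: mh1.
  - exact: (mexp lam x).
  - move=> t; rewrite /= in_itv/= => /andP[xt _]; rewrite lee_fin; exact: h1_le.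
have le2 : (\int[mu]_(t in `[(x + s)%R, +oo[) (h1 x t)%:E <=
            \int[mu]_(t in `[(x + s)%R, +oo[) ((expR (- m))%:E * (expR (- lam * (t - x))%R)%:E))%E.
  apply: ge0_le_integral => //.
  - by move=> t _; rewrite lee_fin expR_ge0.
  - exact: mh1.
  - apply: measurable_funeM; exact: (mexp lam x).
  - move=> t; rewrite /= in_itv/= andbT => xt; rewrite -EFinM lee_fin.
    apply: h1_le2; last exact: le_trans xt.
    apply: le_trans hm _; apply: Rint_itv_mono => //.
rewrite ge0_integralZl_EFin// in le2; last exact: (mexp lam x).
rewrite int_expy_sh// addrAC subrr add0r in le2.
rewrite /I1 U ge0_integral_setU//; last first.
  by apply: (mh1 x); exact: measurableU.
apply: le_trans; first apply: leeD.
- exact: le1.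
- exact: le2.
rewrite Eg -EFinM -EFinD lee_fin le_eqVlt; apply/orP; left; apply/eqP; ring.
Qed.

Let mexpN (x : R) (D : set R) : measurable_fun D (fun t => (expR (- lam * (x - t)))%:E).
Proof.
apply/measurable_EFinP; apply: measurable_funTS; apply: continuous_measurable_fun => z.
apply: continuous_comp; last exact: continuous_expR.
apply: continuousM => //; first exact: cst_continuous.
apply: continuousB => //; exact: cst_continuous.
Qed.

Lemma I2_ub x s m : 0 < s -> m <= P (x - s) x ->
  (I2 q lam x <= (lam^-1 - (1 - expR (- m)) * (expR (- lam * s) / lam))%:E)%E.
Proof.
move=> s0 hm.
have xs : x - s <= x by rewrite lerBlDr lerDl ltW.
have U : `]-oo, x]%classic = `]-oo, (x - s)]%classic `|` `](x - s), x]%classic :> set R.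
  by apply: itv_bndbnd_setU; rewrite bnd_simp.
have D : [disjoint `]-oo, (x - s)]%classic & `](x - s), x]%classic].
  apply/disj_setPS => t [/=]; rewrite !in_itv/= => t1 /andP[t2 _].
  by move: t1; rewrite leNgt t2.
have Eg : (\int[mu]_(t in `](x - s)%R, x]) (expR (- lam * (x - t))%R)%:E =
           (lam^-1 - expR (- lam * s) / lam)%R%:E)%E.
  have := int_expNy_sh x x hlam; rewrite U ge0_integral_setU//; last first.
    exact: (mexpN x).
  rewrite int_expNy_sh// subrr mulr0 expR0 div1r.
  have -> : x - (x - s) = s by ring.
  set A := (\int[_]_(t in _) _)%E.
  clearbody A; case: A => [r| |] H.
  - by move: H; rewrite -EFinD => -[E]; congr EFin; lra.
  - by move: H; rewrite addey.
  - by move: H; rewrite addeNy.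
have le1 : (\int[mu]_(t in `](x - s)%R, x]) (h2 x t)%:E <=
            \int[mu]_(t in `](x - s)%R, x]) (expR (- lam * (x - t))%R)%:E)%E.
  apply: ge0_le_integral => //.
  - by move=> t _; rewrite lee_fin expR_ge0.
  - exact: mh2.
  - exact: (mexpN x).
  - move=> t; rewrite /= in_itv/= => /andP[_ xt]; rewrite lee_fin; exact: h2_le.
have le2 : (\int[mu]_(t in `]-oo, (x - s)%R]) (h2 x t)%:E <=
            \int[mu]_(t in `]-oo, (x - s)%R]) ((expR (- m))%:E * (expR (- lam * (x - t))%R)%:E))%E.
  apply: ge0_le_integral => //.
  - by move=> t _; rewrite lee_fin expR_ge0.
  - exact: mh2.
  - apply: measurable_funeM; exact: (mexpN x).
  - move=> t; rewrite /= in_itv/= => xt; rewrite -EFinM lee_fin.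
    apply: h2_le2; last exact: le_trans xs.
    apply: le_trans hm _; apply: Rint_itv_mono => //.
rewrite ge0_integralZl_EFin// in le2; last exact: (mexpN x).
rewrite int_expNy_sh// in le2.
have E2 : x - (x - s) = s by ring.
rewrite E2 in le2.
rewrite /I2 U ge0_integral_setU//; last first.
  by apply: (mh2 x); exact: measurableU.
apply: le_trans; first apply: leeD.
- exact: le2.
- exact: le1.
rewrite Eg -EFinM -EFinD lee_fin le_eqVlt; apply/orP; left; apply/eqP; ring.
Qed.

Lemma I1_lb : ((expR (- F 0 1))%:E <= I1 q lam 0)%E.
Proof.
rewrite /I1.
apply: (@le_trans _ _ (\int[mu]_(t in `[0%R, 1%R]) (h1 0 t)%:E)%E).
  apply: (@le_trans _ _ (\int[mu]_(t in `[0%R, 1%R]) (expR (- F 0 1))%:E)%E).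
    rewrite integral_cst// -[leLHS]mule1; apply: lee_pmul => //.
    have := mu_itvE (@ler01 R); rewrite subr0 => <-; exact: lexx.
  apply: ge0_le_integral => //.
  - exact: mh1.
  - move=> t; rewrite /= in_itv/= => /andP[_ t1].
    by rewrite lee_fin /h1 ler_expR lerN2; apply: Rint_itv_mono.
apply: ge0_subset_integral => //.
- exact: mh1.
- by move=> t _; rewrite lee_fin expR_ge0.
- by apply: subset_itvl; rewrite bnd_simp.
Qed.

Lemma I2_lb : ((expR (- F (-1) 0))%:E <= I2 q lam 0)%E.
Proof.
rewrite /I2.
apply: (@le_trans _ _ (\int[mu]_(t in `[(-1)%R, 0%R]) (h2 0 t)%:E)%E).
  apply: (@le_trans _ _ (\int[mu]_(t in `[(-1)%R, 0%R]) (expR (- F (-1) 0))%:E)%E).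
    rewrite integral_cst// -[leLHS]mule1; apply: lee_pmul => //.
    have := mu_itvE (@lerN10 R); rewrite sub0r opprK => <-; exact: lexx.
  apply: ge0_le_integral => //.
  - exact: mh2.
  - move=> t; rewrite /= in_itv/= => /andP[t1 _].
    by rewrite lee_fin /h2 ler_expR lerN2; apply: Rint_itv_mono.
apply: ge0_subset_integral => //.
- exact: mh2.
- by move=> t _; rewrite lee_fin expR_ge0.
- by apply: subset_itvr; rewrite bnd_simp.
Qed.
End Main.

Unset Implicit Arguments.

Theorem lemma6p1 (R : realType) (q : R -> R)
  (hq0 : forall x, 0 <= q x)
  (hqloc : locally_integrable setT q)
  (a : R) (ha : 0 < a)
  (hinf : (0 < ereal_inf [set (\int[@lebesgue_measure R]_(t in `[(x - a)%R, (x + a)%R]) (q t)%:E)%E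
                          | x in [set: R]])%E)
  (lam : R) (hlam : 0 < lam) :
  (exists2 d1 : R, 0 < d1 &
      ereal_sup [set I1 q lam x | x in [set: R]] = ((lam + d1)^-1)%:E) /\
  (exists2 d2 : R, 0 < d2 &
      ereal_sup [set I2 q lam x | x in [set: R]] = ((lam + d2)^-1)%:E).
Proof.
have [m m0 hm] : exists2 m : R, 0 < m &
    forall y, m <= Rintegral (@lebesgue_measure R) `[y - a, y + a] q.
  move: hinf; set M := ereal_inf _ => M0.
  have HM y : (M <= \int[@lebesgue_measure R]_(t in `[(y - a)%R, (y + a)%R]) (q t)%:E)%E.
    by apply: ereal_inf_lbound; exists y.
  have Hf y : (\int[@lebesgue_measure R]_(t in `[(y - a)%R, (y + a)%R]) (q t)%:E)%E \is a fin_num.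
    exact/integrable_fin_num/li_int.
  clearbody M; case: M M0 HM => [r| |] M0 HM //.
  - exists r => // y; rewrite /Rintegral -lee_fin fineK//; exact: HM.
  - exists 1 => // y; move: (Hf y) (HM y).
    by case: (\int[_]_(_ in _) _)%E.
have s0 : 0 < a + a by rewrite addr_gt0.
have Bl : lam^-1 - (1 - expR (- m)) * (expR (- lam * (a + a)) / lam) < lam^-1.
  have X0 : 0 < (1 - expR (- m)) * (expR (- lam * (a + a)) / lam).
    apply: mulr_gt0; last by rewrite divr_gt0// expR_gt0.
    by rewrite subr_gt0 -expR0 ltr_expR oppr_lt0.
  lra.
split.
- apply: (sup_lemma (c := expR (- Rintegral (@lebesgue_measure R) `[0, 1]
                                      (fun xi => q xi + lam)))) Bl _ _ => //.
  + exact: expR_gt0.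
  + move=> x; apply: I1_ub => //.
    by have := hm (x + a); rewrite addrK -addrA.
  + exact: I1_lb.
- apply: (sup_lemma (c := expR (- Rintegral (@lebesgue_measure R) `[-1, 0]
                                      (fun xi => q xi + lam)))) Bl _ _ => //.
  + exact: expR_gt0.
  + move=> x; apply: I2_ub => //.
    by have := hm (x - a); rewrite subrK -addrA -opprD.
  + exact: I2_lb.
Qed.
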